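(* There is a $32$-point code in $\mathrm{SO}(4)$ which is a subgroup of $\mathrm{SO}(4)$, is universally optimal, and whose points form the vertices of a regular cross polytope in the sphere $\{X\in\mathbb{R}^{4\times 4}: \|X\|_F=2\}\cong S^{15}$ (i.e., the $32$ points consist of $16$ antipodal pairs, and any two points not antipodal to each other are orthogonal with respect to the Frobenius inner product).
   Context: $\mathrm{SO}(n)$ carries the chordal distance $d_c(U_1,U_2)=\|U_1-U_2\|_F$, from the embedding $\mathrm{SO}(n)\subset\mathbb{R}^{n\times n}$; every element of $\mathrm{SO}(4)$ has Frobenius norm $2$. A code is a finite subset. A function $g:(0,\infty)\to\mathbb{R}$ is completely monotonic if it is smooth and $(-1)^kg^{(k)}\ge0$ for all $k\ge 0$. A code $\mathcal{C}\subset\mathrm{SO}(n)$ is universally optimal if for every completely monotonic $g$ it minimizes $\sum_{x\ne y\in\mathcal{C}} g(d_c(x,y)^2)$ among all codes in $\mathrm{SO}(n)$ of the same size. *)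

(* Defs.v *)
From HB Require Import structures.
From mathcomp Require Import all_boot all_order all_algebra.
From mathcomp Require Import all_classical all_reals all_analysis.
Set Implicit Arguments. Unset Strict Implicit. Unset Printing Implicit Defensive.
Import Order.TTheory GRing.Theory Num.Theory.
Local Open Scope ring_scope.

Definition frob_dot (R : realType) (n : nat) (A B : 'M[R]_n) : R :=
  \sum_(i < n) \sum_(j < n) A i j * B i j.

Definition chordal_sq (R : realType) (n : nat) (U1 U2 : 'M[R]_n) : R :=
  frob_dot (U1 - U2) (U1 - U2).

Definition in_SO (R : realType) (n : nat) (U : 'M[R]_n) : Prop :=
  U^T *m U = 1%:M /\ \det U = 1.

Definition completely_monotonic (R : realType) (g : R -> R) : Prop :=
  forall (k : nat) (x : R), 0 < x ->
    derivable (derive1n k g) x 1 /\ 0 <= (-1) ^+ k * derive1n k g x.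

Definition energy (R : realType) (n : nat) (g : R -> R) (C : seq 'M[R]_n) : R :=
  \sum_(x <- C) \sum_(y <- C | y != x) g (chordal_sq x y).

Definition is_code (R : realType) (n : nat) (C : seq 'M[R]_n) : Prop :=
  uniq C /\ (forall U, U \in C -> in_SO U).

Definition universally_optimal (R : realType) (n : nat) (C : seq 'M[R]_n) : Prop :=
  forall g : R -> R, completely_monotonic g ->
  forall C' : seq 'M[R]_n, is_code C' -> size C' = size C ->
    energy g C <= energy g C'.

Definition is_subgroup (R : realType) (n : nat) (C : seq 'M[R]_n) : Prop :=
  (1%:M \in C) /\ (forall x y, x \in C -> y \in C -> x *m y \in C)
  /\ (forall x, x \in C -> invmx x \in C).

Definition cross_polytope (R : realType) (n : nat) (C : seq 'M[R]_n) : Prop :=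
  (forall x, x \in C -> - x \in C) /\
  (forall x y, x \in C -> y \in C -> y != x -> y != - x -> frob_dot x y = 0).

(* Main.v *)
Require Import Defs.
From HB Require Import structures.
From mathcomp Require Import all_boot all_order all_algebra.
From mathcomp Require Import all_classical all_reals all_analysis.
From mathcomp Require Import ring lra.
Import Order.TTheory GRing.Theory Num.Theory.
Local Open Scope ring_scope.
Section Q.
Context {R : realType}.
Definition quat := (R * R * R * R)%type.
Definition qmul (a b : quat) : quat :=
 let: (a0,a1,a2,a3) := a in let: (b0,b1,b2,b3) := b in
 (a0*b0 - a1*b1 - a2*b2 - a3*b3, a0*b1 + a1*b0 + a2*b3 - a3*b2,
  a0*b2 - a1*b3 + a2*b0 + a3*b1, a0*b3 + a1*b2 - a2*b1 + a3*b0).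
Definition qc (j : nat) (q : quat) : R :=
  let: (q0,q1,q2,q3) := q in
  match j with 0 => q0 | 1 => q1 | 2 => q2 | _ => q3 end.
Definition qe (i : nat) : quat :=
  match i with 0 => (1,0,0,0) | 1 => (0,1,0,0) | 2 => (0,0,1,0) | _ => (0,0,0,1) end.
Definition qscale (k : R) (a : quat) : quat :=
  let: (a0,a1,a2,a3) := a in (k*a0,k*a1,k*a2,k*a3).
Definition qconj (a : quat) : quat :=
  let: (a0,a1,a2,a3) := a in (a0,-a1,-a2,-a3).
Definition qdot (a b : quat) : R :=
 let: (a0,a1,a2,a3) := a in let: (b0,b1,b2,b3) := b in
 a0*b0 + a1*b1 + a2*b2 + a3*b3.
Definition Mq (a b : quat) : 'M[R]_4 :=
  \matrix_(i < 4, j < 4) qc j (qmul (qmul a (qe i)) b).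

Lemma sum4 (F : 'I_4 -> R) :
  \sum_(i < 4) F i = F (@Ordinal 4 0 isT) + F (@Ordinal 4 1 isT) + F (@Ordinal 4 2 isT) + F (@Ordinal 4 3 isT).
Proof.
rewrite !big_ord_recl big_ord0 addr0 !addrA.
by do !congr (_ + _); congr F; apply: val_inj.
Qed.

Ltac ord4 i := let Hi := fresh in case: i => [[|[|[|[|?]]]] Hi] //.
Ltac dq a := let a0 := fresh "a" in let a1 := fresh "a" in let a2 := fresh "a" in let a3 := fresh "a" in case: a => [[[a0 a1] a2] a3].

Lemma MqM (a b c d : quat) : Mq a b *m Mq c d = Mq (qmul c a) (qmul b d).
Proof.
apply/matrixP => i j; rewrite !mxE sum4 !mxE.
dq a; dq b; dq c; dq d; ord4 i; ord4 j; rewrite /=; ring.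
Qed.

Lemma MqZl k a b : Mq (qscale k a) b = k *: Mq a b.
Proof. apply/matrixP => i j; rewrite !mxE. dq a; dq b; ord4 i; ord4 j; rewrite /=; ring. Qed.
Lemma MqZr k a b : Mq a (qscale k b) = k *: Mq a b.
Proof. apply/matrixP => i j; rewrite !mxE. dq a; dq b; ord4 i; ord4 j; rewrite /=; ring. Qed.
Lemma Mq_tr a b : (Mq a b)^T = Mq (qconj a) (qconj b).
Proof. apply/matrixP => i j; rewrite !mxE. dq a; dq b; ord4 i; ord4 j; rewrite /=; ring. Qed.
Lemma Mq1 : Mq (qe 0) (qe 0) = 1%:M.
Proof. apply/matrixP => i j; rewrite !mxE. ord4 i; ord4 j; rewrite /=; ring. Qed.

Lemma Mq_frob a b c d : frob_dot (Mq a b) (Mq c d) = 4 * qdot a c * qdot b d.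
Proof.
rewrite /frob_dot sum4; rewrite !sum4 !mxE.
dq a; dq b; dq c; dq d; rewrite /=; ring.
Qed.
Definition sgn (s : bool) : R := if s then 1 else -1.
Definition qi (a b : nat) : nat :=
  match a, b with 0, _ => b | _, 0 => a | 1,1 => 0 |1,2=>3|1,_=>2|2,1=>3|2,2=>0|2,_=>1|_,1=>2|_,2=>1|_,_=>0 end.
Definition qs (a b : nat) : bool :=
  match a,b with 0,_ => true | _,0 => true | 1,2 => true | 2,3 => true | 3,1 => true | _,_ => false end.
Definition qsq (a : nat) : quat :=
  match a with 0 => (1,0,0,0) | 1 => (1,1,0,0) | 2 => (1,0,1,0) | _ => (1,0,0,1) end.
Ltac n4 a := case: a => [|[|[|[|?]]]] //.
Ltac qeq := rewrite /=; try (congr (_,_,_,_); ring).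

Lemma qe_mul a b : (a < 4)%N -> (b < 4)%N ->
  qmul (qe a) (qe b) = qscale (sgn (qs a b)) (qe (qi a b)).
Proof. by n4 a; n4 b => _ _; qeq. Qed.
Lemma qi_lt a b : (a < 4)%N -> (b < 4)%N -> (qi a b < 4)%N.
Proof. by n4 a; n4 b. Qed.
Lemma qconj_qe a : (a < 4)%N -> qconj (qe a) = qscale (sgn (a == 0)%N) (qe a).
Proof. by n4 a => _; qeq. Qed.
Lemma qe_inv1 a : (a < 4)%N -> qmul (qe a) (qconj (qe a)) = qe 0.
Proof. by n4 a => _; qeq. Qed.
Lemma qe_inv2 a : (a < 4)%N -> qmul (qconj (qe a)) (qe a) = qe 0.
Proof. by n4 a => _; qeq. Qed.
Lemma qdot_qe a b : (a < 4)%N -> (b < 4)%N -> qdot (qe a) (qe b) = (a == b)%:R.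
Proof. by n4 a; n4 b => _ _; rewrite /=; ring. Qed.
Lemma qsq_sq a : (a < 4)%N -> qmul (qsq a) (qsq a) = qscale (if a == 0%N then 1 else 2) (qe a).
Proof. by n4 a => _; qeq. Qed.
Definition elt (u : bool * (nat * nat)) : 'M[R]_4 := sgn u.1 *: Mq (qe u.2.1) (qe u.2.2).
Definition idx : seq (bool * (nat * nat)) :=
  [seq (s, ab) | s <- [:: true; false], ab <- [seq (a, b) | a <- iota 0 4, b <- iota 0 4]].
Definition code : seq 'M[R]_4 := map elt idx.

Lemma in_idx s a b : ((s, (a, b)) \in idx) = (a < 4)%N && (b < 4)%N.
Proof.
apply/idP/idP.
  move/allpairsP => [[s' ab] [_ /allpairsP [[a' b'] [ha hb ->]]]] /= [_ -> ->].
  by move: ha hb; rewrite !mem_iota /= !add0n => -> ->.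
move=> /andP[ha hb]; apply/allpairsP; exists (s, (a, b)); split => //.
  by case: s.
by apply/allpairsP; exists (a, b); rewrite !mem_iota.
Qed.

Lemma sgn2 s : sgn s * sgn s = 1.
Proof. by case: s; rewrite /sgn ?mulr1 ?mulrNN ?mulr1. Qed.
Lemma sgnM s t : sgn s * sgn t = sgn (s == t).
Proof. by case: s; case: t; rewrite /sgn ?mulr1 ?mul1r ?mulrNN ?mulr1. Qed.
Lemma sgnN s : sgn (~~ s) = - sgn s.
Proof. by case: s; rewrite /sgn ?opprK. Qed.

Lemma frobZ k l (A B : 'M[R]_4) : frob_dot (k *: A) (l *: B) = k * l * frob_dot A B.
Proof.
rewrite /frob_dot mulr_sumr; apply: eq_bigr => i _; rewrite mulr_sumr.
by apply: eq_bigr => j _; rewrite !mxE; ring.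
Qed.

Lemma elt_frob s a b t c d : (a < 4)%N -> (b < 4)%N -> (c < 4)%N -> (d < 4)%N ->
  frob_dot (elt (s,(a,b))) (elt (t,(c,d))) = sgn s * sgn t * 4 * (a == c)%:R * (b == d)%:R.
Proof.
move=> ha hb hc hd; rewrite /elt /= frobZ Mq_frob !qdot_qe //; ring.
Qed.

Lemma elt_opp s a b : - elt (s, (a, b)) = elt (~~ s, (a, b)).
Proof. by rewrite /elt /= sgnN scaleNr. Qed.

Lemma elt_mul s a b t c d : (a < 4)%N -> (b < 4)%N -> (c < 4)%N -> (d < 4)%N ->
  elt (s,(a,b)) *m elt (t,(c,d)) =
  elt ((s == t) == (qs c a == qs b d), (qi c a, qi b d)).
Proof.
move=> ha hb hc hd; rewrite /elt /= -scalemxAl -scalemxAr scalerA MqM !qe_mul //.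
by rewrite MqZl MqZr !scalerA -!sgnM; congr (_ *: _); ring.
Qed.

Lemma trZ k (A : 'M[R]_4) : (k *: A)^T = k *: A^T.
Proof. by apply/matrixP => i j; rewrite !mxE. Qed.

Lemma elt_tr s a b : (a < 4)%N -> (b < 4)%N ->
  (elt (s,(a,b)))^T = elt (s == ((a == 0%N) == (b == 0%N)), (a, b)).
Proof.
move=> ha hb; rewrite /elt /= trZ Mq_tr !qconj_qe // MqZl MqZr !scalerA -!sgnM.
by congr (_ *: _); ring.
Qed.

Lemma elt_orth s a b : (a < 4)%N -> (b < 4)%N ->
  (elt (s,(a,b)))^T *m elt (s,(a,b)) = 1%:M.
Proof.
move=> ha hb; rewrite /elt /= trZ Mq_tr -scalemxAl -scalemxAr scalerA sgn2 scale1r MqM.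
by rewrite qe_inv1 // qe_inv2 // Mq1.
Qed.

Lemma elt_det s a b : (a < 4)%N -> (b < 4)%N -> \det (elt (s,(a,b))) = 1.
Proof.
move=> ha hb.
have d2 : \det (elt (s,(a,b))) * \det (elt (s,(a,b))) = 1.
  by rewrite -{1}det_tr -det_mulmx elt_orth // det1.
set ka : R := if a == 0%N then 1 else 2.
set kb : R := if b == 0%N then 1 else 2.
have kp : 0 < ka * kb by rewrite /ka /kb; case: (a == 0%N); case: (b == 0%N); rewrite /=; lra.
have W : Mq (qsq a) (qsq b) *m Mq (qsq a) (qsq b) = (ka * kb) *: Mq (qe a) (qe b).
  by rewrite MqM !qsq_sq // MqZl MqZr scalerA mulrC.
have dge : 0 <= \det (elt (s,(a,b))).
  have h1 : \det (elt (s,(a,b))) = \det (Mq (qe a) (qe b)).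
    have e4 : sgn s ^+ 4 = 1 by rewrite !exprS expr0; clear d2; case: s; rewrite /sgn; ring.
    by rewrite /elt /= detZ e4 mul1r.
  have h2 : \det (Mq (qsq a) (qsq b)) ^+ 2 = (ka * kb) ^+ 4 * \det (Mq (qe a) (qe b)).
    by rewrite expr2 -det_mulmx W detZ.
  rewrite h1.
  have : 0 <= (ka * kb) ^+ 4 * \det (Mq (qe a) (qe b)) by rewrite -h2 sqr_ge0.
  by rewrite pmulr_rge0 // exprn_gt0.
nra.
Qed.
Lemma codeP x : x \in code -> exists s a b, [/\ (a < 4)%N, (b < 4)%N & x = elt (s,(a,b))].
Proof.
by case/mapP => [[s [a b]]]; rewrite in_idx => /andP[ha hb] ->; exists s, a, b.
Qed.
Lemma in_code s a b : (a < 4)%N -> (b < 4)%N -> elt (s,(a,b)) \in code.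
Proof. by move=> ha hb; apply: map_f; rewrite in_idx ha hb. Qed.

Lemma size_code : size code = 32%N.
Proof. by rewrite size_map. Qed.

Lemma frob_self x : x \in code -> frob_dot x x = 4.
Proof.
by case/codeP => s [a [b [ha hb ->]]]; rewrite elt_frob // !eqxx sgn2 /=; ring.
Qed.

Lemma code_uniq : uniq code.
Proof.
rewrite map_inj_in_uniq //.
move=> [s [a b]] [t [c d]]; rewrite !in_idx => /andP[ha hb] /andP[hc hd] E.
have h1 := @elt_frob s a b t c d ha hb hc hd.
have h2 := @elt_frob s a b s a b ha hb ha hb.
rewrite -E h2 !eqxx sgn2 /= in h1; move: h1.
case: eqP => [<-|_]; case: eqP => [<-|_]; rewrite ?mulr0 ?mulr1 //; last first.
  1-3: by move=> /eqP; rewrite mul1r pnatr_eq0.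
rewrite mul1r sgnM => /eqP.
case st: (s == t); first by rewrite (eqP st).
rewrite /sgn => /eqP E2; exfalso; move: E2; lra.
Qed.
Lemma inv_SO (U : 'M[R]_4) : in_SO U -> invmx U = U^T.
Proof.
move=> [H1 H2].
have Uu : U \in unitmx by rewrite unitmxE H2 unitr1.
have H3 : U *m U^T = 1%:M by apply: mulmx1C.
by rewrite -[RHS]mul1mx -(mulVmx Uu) -mulmxA H3 mulmx1.
Qed.

Lemma code_SO U : U \in code -> in_SO U.
Proof.
by case/codeP => s [a [b [ha hb ->]]]; split; [apply: elt_orth | apply: elt_det].
Qed.

Lemma code_sub : is_subgroup code.
Proof.
split; first by rewrite -Mq1 -[Mq _ _]scale1r; apply: (@in_code true 0 0).
split.
  move=> x y /codeP [s [a [b [ha hb ->]]]] /codeP [t [c [d [hc hd ->]]]].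
  by rewrite elt_mul // in_code // qi_lt.
move=> x xC; rewrite inv_SO; last exact: code_SO.
by case/codeP: xC => s [a [b [ha hb ->]]]; rewrite elt_tr // in_code.
Qed.

Lemma code_cross : cross_polytope code.
Proof.
split.
  by move=> x /codeP [s [a [b [ha hb ->]]]]; rewrite elt_opp in_code.
move=> x y /codeP [s [a [b [ha hb ->]]]] /codeP [t [c [d [hc hd ->]]]] ne1 ne2.
rewrite elt_frob //.
case: eqP => [ac|]; last by rewrite !mulr0 mul0r.
case: eqP => [bd|]; last by rewrite mulr0.
subst c d; exfalso.
case st: (s == t); first by move: ne1; rewrite (eqP st) eqxx.
move: ne2; rewrite elt_opp.
have tE : t = ~~ s by move: st; case: (s); case: (t).
by rewrite tE eqxx.
Qed.
End Q.

Section A.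
Context {R : realType}.

Lemma is_derive_quad (a b c x : R) :
  is_derive x 1 (fun d : R => a + b * d + c * (d * d)) (b + c * (x + x)).
Proof.
have H1 : is_derive x 1 (@id R) 1 := is_derive_id x 1.
have H2 := is_deriveM H1 H1.
have H3 := is_deriveZ c H2.
have H4 := is_deriveZ b H1.
have H5 := is_deriveD (is_derive_cst a x 1) H4.
have H6 := is_deriveD H5 H3.
set f := (X in is_derive _ _ X _) in H6.
have -> : (fun d : R => a + b * d + c * (d * d)) = f.
  by apply/funext => d; rewrite /f.
apply: (is_derive_eq H6).
by rewrite /GRing.scale /= !mulr1 add0r.
Qed.

Lemma incr_of (f df : R -> R) (a b : R) : a <= b ->
  (forall x, a <= x <= b -> is_derive x 1 f (df x)) ->
  (forall x, a <= x <= b -> 0 <= df x) -> f a <= f b.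
Proof.
move=> ab hd hp.
have dv : {in `[a, b]%R, forall x, derivable f x 1}.
  by move=> x; rewrite in_itv /= => xi; by case: (hd x xi).
have cf := derivable_within_continuous dv.
have hd' : forall x, x \in `]a, b[%R -> is_derive x 1 f (df x).
  by move=> x; rewrite in_itv /= => /andP[h1 h2]; apply: hd; rewrite !ltW.
rewrite -subr_ge0; have [c cab ->] := MVT_segment ab hd' cf.
rewrite in_itv /= in cab.
by apply: mulr_ge0; [apply: hp | rewrite subr_ge0].
Qed.

Lemma decr_of (f df : R -> R) (a b : R) : a <= b ->
  (forall x, a <= x <= b -> is_derive x 1 f (df x)) ->
  (forall x, a <= x <= b -> df x <= 0) -> f b <= f a.
Proof.
move=> ab hd hp.
have := @incr_of (fun x => - f x) (fun x => - df x) a b ab.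
rewrite lerN2; apply.
  by move=> x xi; apply: is_deriveN; apply: hd.
by move=> x xi; rewrite oppr_ge0; apply: hp.
Qed.

Lemma rolle0 (f df : R -> R) (a b : R) : a < b ->
  (forall x, a <= x <= b -> is_derive x 1 f (df x)) -> f a = f b ->
  exists c, a < c < b /\ df c = 0.
Proof.
move=> ab hd fab.
have dv : {in `[a, b]%R, forall x, derivable f x 1}.
  by move=> x; rewrite in_itv /= => xi; by case: (hd x xi).
have cf := derivable_within_continuous dv.
have hd' : forall x, x \in `]a, b[%R -> derivable f x 1.
  by move=> x; rewrite in_itv /= => /andP[h1 h2]; case: (hd x _) => //; rewrite !ltW.
have [c cab H] := Rolle ab hd' cf fab.
rewrite in_itv /= in cab; exists c; split => //.
have H2 : is_derive c 1 f (df c) by apply: hd; case/andP: cab => h1 h2; rewrite !ltW.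
by rewrite -(derive_val (is_derive := H2)) (derive_val (is_derive := H)).
Qed.

Lemma three_sign (G0 G1 G2 G3 : R -> R) :
  (forall x : R, 0 < x -> is_derive x 1 G0 (G1 x)) ->
  (forall x : R, 0 < x -> is_derive x 1 G1 (G2 x)) ->
  (forall x : R, 0 < x -> is_derive x 1 G2 (G3 x)) ->
  (forall x : R, 0 < x -> G3 x <= 0) ->
  G0 8 = 0 -> G1 8 = 0 -> G0 16 = 0 ->
  forall d, 0 < d <= 16 -> 0 <= G0 d.
Proof.
move=> d0 d1 d2 s3 e0 e1 e16.
have [xi [/andP[xi1 xi2] G1xi]] : exists c, 8 < c < 16 /\ G1 c = 0.
  apply: (@rolle0 G0 G1); [lra| move=> x /andP[? ?]; apply: d0; lra| by rewrite e0 e16].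
have [eta [/andP[et1 et2] G2et]] : exists c, 8 < c < xi /\ G2 c = 0.
  apply: (@rolle0 G1 G2); [done| move=> x /andP[? ?]; apply: d1; lra| by rewrite e1 G1xi].
have G2a x : 0 < x <= eta -> 0 <= G2 x.
  move=> /andP[h1 h2]; rewrite -G2et; apply: (@decr_of G2 G3) => // y /andP[y1 y2].
    by apply: d2; lra.
  by apply: s3; lra.
have G2b x : eta <= x -> G2 x <= 0.
  move=> h; rewrite -G2et; apply: (@decr_of G2 G3) => // y /andP[y1 y2].
    by apply: d2; lra.
  by apply: s3; lra.
move=> d /andP[dp d16].
case: (lerP d 8) => [d8|d8].
  rewrite -e0; apply: (@decr_of G0 G1) => // y /andP[y1 y2]; first by apply: d0; lra.
  rewrite -e1; apply: (@incr_of G1 G2) => // z /andP[z1 z2]; first by apply: d1; lra.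
  by apply: G2a; lra.
case: (lerP d xi) => [dxi|dxi].
  rewrite -e0; apply: (@incr_of G0 G1); [lra| move=> y /andP[? ?]; apply: d0; lra|].
  move=> y /andP[y1 y2].
  case: (lerP y eta) => [ye|ye].
    rewrite -e1; apply: (@incr_of G1 G2); [lra| move=> z /andP[? ?]; apply: d1; lra|].
    by move=> z /andP[? ?]; apply: G2a; lra.
  rewrite -G1xi; apply: (@decr_of G1 G2); [lra| move=> z /andP[? ?]; apply: d1; lra|].
  by move=> z /andP[? ?]; apply: G2b; lra.
rewrite -e16; apply: (@decr_of G0 G1); [lra| move=> y /andP[? ?]; apply: d0; lra|].
move=> y /andP[y1 y2].
rewrite -G1xi; apply: (@decr_of G1 G2); [lra| move=> z /andP[? ?]; apply: d1; lra|].
by move=> z /andP[? ?]; apply: G2b; lra.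
Qed.
Lemma cm_deriv (g : R -> R) (k : nat) (x : R) : completely_monotonic g -> 0 < x ->
  is_derive x 1 (derive1n k g) (derive1n k.+1 g x).
Proof.
move=> H hx; have [dv _] := H k x hx.
apply: is_derive_eq (derivableP dv) _.
by rewrite -derive1E.
Qed.

Lemma cm_sign (g : R -> R) (k : nat) (x : R) : completely_monotonic g -> 0 < x ->
  0 <= (-1) ^+ k * derive1n k g x.
Proof. by move=> H hx; have [_ s] := H k x hx. Qed.

Lemma cm_bound (g : R -> R) : completely_monotonic g ->
  let g1 := derive1n 1 g 8 in
  let K := (g 16 - g 8 - 8 * g1) / 64 in
  forall d, 0 < d <= 16 -> g 8 + g1 * (d - 8) + K * ((d - 8) * (d - 8)) <= g d.
Proof.
move=> H g1 K d hd.
set c := K; set b := g1 - 16 * K; set a := g 8 - 8 * g1 + 64 * K.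
have key := @three_sign (fun d => g d - (a + b * d + c * (d * d)))
  (fun d => derive1n 1 g d - (b + c * (d + d)))
  (fun d => derive1n 2 g d - (c + c)) (derive1n 3 g).
have : 0 <= g d - (a + b * d + c * (d * d)).
  apply: key => //.
  - move=> x hx; have h := is_deriveB (@cm_deriv g 0 x H hx) (is_derive_quad a b c x).
    exact: h.
  - move=> x hx; have h := is_deriveB (@cm_deriv g 1 x H hx) (is_derive_quad b (c + c) 0 x).
    apply: is_derive_eq.
      have -> : (fun d => derive1n 1 g d - (b + c * (d + d))) = 
                (fun d => derive1n 1 g d - (b + (c + c) * d + 0 * (d * d))).
        by apply/funext => y; congr (_ - _); ring.
      exact: h.
    by rewrite mul0r addr0.
  - move=> x hx; have h := is_deriveB (@cm_deriv g 2 x H hx) (is_derive_cst (c + c) x 1).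
    by apply: is_derive_eq; rewrite subr0.
  - by move=> x hx; have := @cm_sign g 3 x H hx; rewrite exprS expr2 !mulN1r opprK mulN1r oppr_ge0.
  - rewrite /a /b /c; ring.
  - rewrite /b /c /g1; ring.
  - rewrite /a /b /c /K; field; done.
move=> /= h; rewrite subr_ge0 in h; apply: le_trans h; rewrite le_eqVlt; apply/orP; left; apply/eqP; rewrite /a /b /c; ring.
Qed.

Lemma cm_g1 (g : R -> R) : completely_monotonic g -> derive1n 1 g 8 <= 0.
Proof.
move=> H; have := @cm_sign g 1 8 H; rewrite expr1 mulN1r oppr_ge0; apply; lra.
Qed.

Lemma cm_K (g : R -> R) : completely_monotonic g ->
  0 <= g 16 - g 8 - 8 * derive1n 1 g 8.
Proof.
move=> H; set g1 := derive1n 1 g 8.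
have h := @incr_of (fun d => g d - (0 + g1 * d + 0 * (d * d)))
  (fun d => derive1n 1 g d - (g1 + 0 * (d + d))) 8 16.
have : g 8 - (0 + g1 * 8 + 0 * (8 * 8)) <= g 16 - (0 + g1 * 16 + 0 * (16 * 16)).
  apply: h.
  - lra.
  - move=> x /andP[x1 x2]; have hx : 0 < x by lra.
    have h2 := is_deriveB (@cm_deriv g 0 x H hx) (is_derive_quad 0 g1 0 x).
    exact: h2.
  - move=> x /andP[x1 x2]; rewrite mul0r addr0 subr_ge0.
    apply: (@incr_of (derive1n 1 g) (derive1n 2 g)).
    + exact: x1.
    + by move=> y /andP[y1 y2]; apply: cm_deriv => //; lra.
    + move=> y /andP[y1 y2]; have hy : 0 < y by lra.
      by have := @cm_sign g 2 y H hy; rewrite expr2 mulN1r opprK mul1r.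
move=> h2.
have e : g 16 - g 8 - 8 * g1 = (g 16 - (0 + g1 * 16 + 0 * (16 * 16))) - (g 8 - (0 + g1 * 8 + 0 * (8 * 8))) by ring.
by rewrite e subr_ge0.
Qed.
End A.

Section E.
Context {R : realType}.
Notation M := 'M[R]_4.

Lemma frob_pair (x y : M) : frob_dot x y = \sum_(k : 'I_4 * 'I_4) x k.1 k.2 * y k.1 k.2.
Proof. by rewrite /frob_dot pair_bigA. Qed.

Lemma frob_sym (x y : M) : frob_dot x y = frob_dot y x.
Proof. by rewrite !frob_pair; apply: eq_bigr => k _; rewrite mulrC. Qed.

Lemma frob_lin (x y : M) (k l : R) :
  frob_dot (x + k *: y) (x + l *: y) = frob_dot x x + (k + l) * frob_dot x y + k * l * frob_dot y y.
Proof.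
rewrite !frob_pair !mulr_sumr -!big_split /=.
by apply: eq_bigr => i _; rewrite !mxE; ring.
Qed.

Lemma chordal_eq (x y : M) : chordal_sq x y = frob_dot x x + frob_dot y y - 2 * frob_dot x y.
Proof.
have := frob_lin x y (-1) (-1); rewrite !scaleN1r /chordal_sq => ->; ring.
Qed.

Lemma frob_plus (x y : M) : frob_dot (x + y) (x + y) = frob_dot x x + frob_dot y y + 2 * frob_dot x y.
Proof.
have := frob_lin x y 1 1; rewrite !scale1r => ->; ring.
Qed.

Lemma frob_ge0 (z : M) : 0 <= frob_dot z z.
Proof. by rewrite frob_pair; apply: sumr_ge0 => k _; rewrite -expr2 sqr_ge0. Qed.

Lemma frob_gt0 (z : M) : z != 0 -> 0 < frob_dot z z.
Proof.
move=> nz.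
case/boolP: [exists k : 'I_4 * 'I_4, z k.1 k.2 != 0] => [/existsP [k hk]|/existsPn H]; last first.
  by exfalso; move/eqP: nz; apply; apply/matrixP => i j; rewrite mxE; have := H (i, j); rewrite negbK => /eqP.
rewrite frob_pair (bigD1 k) //=.
apply: lt_le_trans (_ : 0 < z k.1 k.2 * z k.1 k.2) _.
  by rewrite lt_def mulf_neq0 // -expr2 sqr_ge0.
by rewrite lerDl; apply: sumr_ge0 => l _; rewrite -expr2 sqr_ge0.
Qed.
Lemma swap3 (I J K : Type) (rI : seq I) (rJ : seq J) (rK : seq K) (F : I -> J -> K -> R) :
  \sum_(i <- rI) \sum_(j <- rJ) \sum_(k <- rK) F i j k =
  \sum_(j <- rJ) \sum_(k <- rK) \sum_(i <- rI) F i j k.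
Proof.
rewrite exchange_big; apply: eq_bigr => j _; exact: exchange_big.
Qed.

Lemma swap4 (I J K L : Type) (rI : seq I) (rJ : seq J) (rK : seq K) (rL : seq L)
  (F : I -> J -> K -> L -> R) :
  \sum_(i <- rI) \sum_(j <- rJ) \sum_(k <- rK) \sum_(l <- rL) F i j k l =
  \sum_(k <- rK) \sum_(l <- rL) \sum_(i <- rI) \sum_(j <- rJ) F i j k l.
Proof.
under eq_bigr => i _ do rewrite swap3.
by rewrite swap3.
Qed.

Lemma S_ge0 (C : seq M) : 0 <= \sum_(x <- C) \sum_(y <- C) frob_dot x y.
Proof.
under eq_bigr => x _ do under eq_bigr => y _ do rewrite frob_pair.
rewrite swap3 swap3; apply: sumr_ge0 => k _.
have <- : (\sum_(x <- C) x k.1 k.2) * (\sum_(y <- C) y k.1 k.2) =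
  \sum_(x <- C) \sum_(y <- C) x k.1 k.2 * y k.1 k.2 by rewrite big_distrlr.
by rewrite -expr2 sqr_ge0.
Qed.

Lemma CS16 (w : 'I_4 * 'I_4 -> R) : (\sum_k w k) ^+ 2 / 16 <= \sum_k w k ^+ 2.
Proof.
set s := \sum_k w k.
have h : 0 <= \sum_k (w k - s / 16) ^+ 2 by apply: sumr_ge0 => k _; apply: sqr_ge0.
have card : #|{: 'I_4 * 'I_4}| = 16%N by rewrite card_prod card_ord.
have e : \sum_k (w k - s / 16) ^+ 2 = \sum_k w k ^+ 2 - 2 * (s / 16) * s + 16 * (s / 16) ^+ 2.
  rewrite (eq_bigr (fun k : ('I_4 * 'I_4)%type => w k ^+ 2 - 2 * (s / 16) * w k + (s / 16) ^+ 2)); last by move=> k _; ring.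
  rewrite big_split sumrB /= -mulr_sumr sumr_const card.
  by rewrite -/s; congr (_ + _); rewrite mulr_natl.
rewrite e in h; rewrite -subr_ge0; apply: le_trans h _.
by rewrite le_eqVlt; apply/orP; left; apply/eqP; field.
Qed.

Lemma T_ge (C : seq M) :
  (\sum_(x <- C) frob_dot x x) ^+ 2 / 16 <= \sum_(x <- C) \sum_(y <- C) frob_dot x y ^+ 2.
Proof.
set W := fun k : 'I_4 * 'I_4 => \sum_(x <- C) x k.1 k.2 * x k.1 k.2.
have e1 : \sum_(x <- C) frob_dot x x = \sum_k W k.
  rewrite /W [RHS]exchange_big /=; apply: eq_bigr => x _; exact: frob_pair.
have e2 : \sum_(x <- C) \sum_(y <- C) frob_dot x y ^+ 2 =
  \sum_k \sum_l (\sum_(x <- C) x k.1 k.2 * x l.1 l.2) ^+ 2.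
  under eq_bigr => x _ do under eq_bigr => y _ do rewrite frob_pair expr2 big_distrlr /=.
  rewrite swap4; apply: eq_bigr => k _; apply: eq_bigr => l _.
  rewrite expr2 big_distrlr /=; apply: eq_bigr => x _; apply: eq_bigr => y _; ring.
rewrite e1 e2; apply: le_trans (CS16 W) _.
apply: ler_sum => k _; rewrite (bigD1 k) //= lerDl.
by apply: sumr_ge0 => l _; apply: sqr_ge0.
Qed.
End E.

Section F.
Variable R : realType.
Notation M := 'M[R]_4.

Lemma sum_const (C : seq M) (c : R) : \sum_(x <- C) c = (size C)%:R * c.
Proof.
elim: C => [|a C IH]; first by rewrite big_nil mul0r.
by rewrite big_cons IH /= -[(size C).+1]addn1 natrD; ring.
Qed.

Lemma frobNr (x y : M) : frob_dot x (- y) = - frob_dot x y.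
Proof. by rewrite !frob_pair -sumrN; apply: eq_bigr => k _; rewrite mxE mulrN. Qed.

Lemma energy_lb (g : R -> R) : completely_monotonic g -> forall C : seq M,
  uniq C -> size C = 32%N -> (forall x, x \in C -> frob_dot x x = 4) ->
  960 * g 8 + 32 * g 16 <= energy g C.
Proof.
move=> Hg C uC sC H.
set g1 := derive1n 1 g 8.
set K := (g 16 - g 8 - 8 * g1) / 64.
set B := - 2 * g1.
set Cc := 4 * K.
have hB : 0 <= B.
  by rewrite /B; have := (@cm_g1 R g Hg); rewrite -/g1 => h; rewrite mulNr oppr_ge0 pmulr_rle0.
have hC : 0 <= Cc.
  by rewrite /Cc /K; have := (@cm_K R g Hg); rewrite -/g1 => h; rewrite mulr_ge0 // divr_ge0.
set F := fun x y : M => g 8 + B * frob_dot x y + Cc * frob_dot x y ^+ 2.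
have step1 : \sum_(x <- C) \sum_(y <- C | y != x) F x y <= energy g C.
  rewrite /energy big_seq [X in _ <= X]big_seq; apply: ler_sum => x xC.
  rewrite big_seq_cond [X in _ <= X]big_seq_cond; apply: ler_sum => y /andP[yC yx].
  have d := chordal_eq x y; rewrite (H x xC) (H y yC) in d.
  have dpos : 0 < chordal_sq x y by apply: frob_gt0; rewrite subr_eq0 eq_sym.
  have d16 : chordal_sq x y <= 16.
    have := frob_ge0 (x + y); rewrite frob_plus (H x xC) (H y yC) d => h; lra.
  have := @cm_bound R g Hg (chordal_sq x y); rewrite dpos d16 => /(_ isT).
  rewrite -/g1 -/K; apply: le_trans; rewrite d /F /B /Cc le_eqVlt; apply/orP; left; apply/eqP; ring.
have step2 : \sum_(x <- C) \sum_(y <- C | y != x) F x y =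
    \sum_(x <- C) (\sum_(y <- C) F x y - (g 8 + 4 * B + 16 * Cc)).
  rewrite big_seq [RHS]big_seq; apply: eq_bigr => x xC.
  rewrite (bigD1_seq x) //= /F (H x xC); ring.
have step3 : \sum_(x <- C) (\sum_(y <- C) F x y - (g 8 + 4 * B + 16 * Cc)) =
    1024 * g 8 + B * (\sum_(x <- C) \sum_(y <- C) frob_dot x y)
    + Cc * (\sum_(x <- C) \sum_(y <- C) frob_dot x y ^+ 2) - 32 * (g 8 + 4 * B + 16 * Cc).
  rewrite sumrB sum_const sC.
  rewrite /F; under eq_bigr => x _ do rewrite !big_split /= -!mulr_sumr sum_const sC.
  rewrite !big_split /= -!mulr_sumr sum_const sC; ring.
have Tb := T_ge C.
have e128 : \sum_(x <- C) frob_dot x x = 128.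
  rewrite big_seq (eq_bigr (fun=> 4)); last by move=> x /H.
  rewrite -big_seq sum_const sC; ring.
rewrite e128 in Tb.
have Sb := S_ge0 C.
apply: le_trans step1; rewrite step2 step3.
have e1024 : (128 : R) ^+ 2 / 16 = 1024 by field; done.
rewrite e1024 in Tb.
move: Tb Sb; rewrite /B /Cc /K.
move: (\sum_(x <- C) \sum_(y <- C) frob_dot x y) (\sum_(x <- C) \sum_(y <- C) frob_dot x y ^+ 2) => S T Tb Sb.
have hK := (@cm_K R g Hg); have h1 := (@cm_g1 R g Hg); rewrite -/g1 in hK h1.
rewrite /g1 in hK h1 *; clear F step2 step3 hB hC Cc B K g1.
move: (g 8) (g 16) (derive1n 1 g 8) hK h1 => a b c hK h1.
have eq : 1024 * a + -2 * c * S + 4 * ((b - a - 8 * c) / 64) * T -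
  32 * (a + 4 * (-2 * c) + 16 * (4 * ((b - a - 8 * c) / 64))) - (960 * a + 32 * b)
  = (-2 * c) * S + ((b - a - 8 * c) / 16) * (T - 1024) by field; done.
rewrite -subr_ge0 eq; apply: addr_ge0; apply: mulr_ge0.
- by rewrite mulNr oppr_ge0 pmulr_rle0.
- done.
- by rewrite divr_ge0.
- by rewrite subr_ge0.
Qed.
Lemma energy_cross (g : R -> R) (C : seq M) :
  uniq C -> size C = 32%N -> (forall x, x \in C -> frob_dot x x = 4) ->
  cross_polytope C -> energy g C = 960 * g 8 + 32 * g 16.
Proof.
move=> uC sC H [Hneg Horth].
have inner : forall x, x \in C ->
    \sum_(y <- C | y != x) g (chordal_sq x y) = 30 * g 8 + g 16.
  move=> x xC.
  have nx : (- x == x) = false.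
    apply/negbTE/eqP => E.
    have := frobNr x x; rewrite E (H x xC); move=> /eqP; by rewrite -subr_eq0 opprK -natrD pnatr_eq0.
  have e : \sum_(y <- C | y != x) g (chordal_sq x y) =
      \sum_(y <- C | y != x) (g 8 + (y == - x)%:R * (g 16 - g 8)).
    rewrite big_seq_cond [RHS]big_seq_cond; apply: eq_bigr => y /andP[yC yx].
    rewrite chordal_eq (H x xC) (H y yC).
    case: eqP => [->|ny].
      rewrite frobNr (H x xC) /= mul1r (addrC (g 8)) subrK; congr g; ring.
    rewrite (Horth x y xC yC yx); last by apply/eqP.
    by rewrite /= mul0r addr0; congr g; ring.
  rewrite e big_split /= -mulr_suml.
  have s1 : \sum_(y <- C | y != x) g 8 = 31 * g 8.
    have h : \sum_(y <- C) g 8 = g 8 + \sum_(y <- C | y != x) g 8 := bigD1_seq x xC uC.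
    rewrite sum_const sC in h.
    have -> : \sum_(y <- C | y != x) g 8 = 32%:R * g 8 - g 8 by rewrite h; ring.
    ring.
  have s2 : \sum_(y <- C | y != x) ((y == - x)%:R : R) = 1.
    have h : \sum_(y <- C) ((y == - x)%:R : R) = ((x == - x)%:R : R) + \sum_(y <- C | y != x) ((y == - x)%:R : R) := bigD1_seq x xC uC.
    move: h; rewrite eq_sym nx /= add0r => <-.
    rewrite (bigD1_seq (- x)) ?Hneg //= eqxx big1 ?addr0 //.
    by move=> y /negbTE ->.
  rewrite s1 s2; ring.
rewrite /energy big_seq (eq_bigr (fun=> 30 * g 8 + g 16)); last by move=> x /inner.
by rewrite -big_seq sum_const sC; ring.
Qed.
End F.

Section Final.
Context {R : realType}.
Lemma frob_SO (U : 'M[R]_4) : U^T *m U = 1%:M -> frob_dot U U = 4.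
Proof.
move=> h; have := congr1 mxtrace h; rewrite mxtrace1 => <-.
rewrite /frob_dot /mxtrace exchange_big; apply: eq_bigr => j _; rewrite !mxE.
by apply: eq_bigr => i _; rewrite !mxE.
Qed.
End Final.

Theorem theorem8p2 (R : realType) :
  exists C : seq 'M[R]_4,
    is_code C /\ size C = 32%N /\ is_subgroup C /\
    universally_optimal C /\ cross_polytope C.
Proof.
exists (@code R).
split; first by split; [exact: code_uniq | exact: code_SO].
split; first exact: size_code.
split; first exact: code_sub.
split; last exact: code_cross.
move=> g Hg C' [uC' SO'] sC'; rewrite size_code in sC'.
rewrite (@energy_cross R g (@code R) code_uniq size_code frob_self code_cross).
apply: energy_lb => // x /SO' [H1 _]; exact: frob_SO.
Qed.
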